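(* Let $G=(U,V,E)$ be a bipartite graph with $|U|=|V|=N$ in which every vertex of $U$ has at least one neighbor, and run the matching algorithm on $G$. Let $i\ge 0$ with $|M(i)|<N$, let $l\ge 0$ be an integer, and let $u_0\in U$ be free with respect to $M(i)$ with $n_{u_0}\subseteq D_l(i)$. Then every augmenting path in $G$ with respect to $M(i)$ starting at $u_0$ has length at least $2l+1$.
   Context: Matching algorithm. For $u\in U$ let $n_u=\{v\in V:(u,v)\in E\}$. The algorithm maintains a matching $M\subseteq E$ (initially empty) and an integer value $h_v$ for each $v\in V$ (initially $0$). A vertex is free if no edge of $M$ is incident to it. One iteration: choose any free $u\in U$ (arbitrary choice); choose $j\in\arg\min_{v\in n_u}h_v$ (ties broken arbitrarily); if some $u_{\rm old}\in U$ has $(u_{\rm old},j)\in M$, remove $(u_{\rm old},j)$ from $M$ (so $u_{\rm old}$ becomes free); add $(u,j)$ to $M$; increase $h_j$ by $1$. Iterations are repeated while $|M|<N$ and the algorithm terminates when $|M|=N$. $M(i)$ and $h_v(i)$ denote the matching and the values after the $i$-th iteration. For an integer $l$, $D_l(i)=\{v\in V: h_v(i)\ge l\}$. With respect to a matching $M$, an alternating path is a simple path in $G$ whose edges alternate between edges not in $M$ and edges in $M$; an augmenting path is an alternating path whose two endpoints are free vertices (one in $U$, one in $V$). The length of a path is its number of edges. *)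

(* Defs.v *)
From mathcomp Require Import all_boot.
Set Implicit Arguments. Unset Strict Implicit. Unset Printing Implicit Defensive.

(* Bipartite graph G = (U, V, E) with E : U -> V -> bool; a matching / edge set
   is a {set U * V}; vertices of G are elements of the sum type U + V. *)

Section Graph.
Variables (U V : finType) (E : U -> V -> bool).

Definition adjG (x y : U + V) : bool :=
  match x, y with
  | inl u, inr v => E u v
  | inr v, inl u => E u v
  | _, _ => false
  end.

Definition edge_inM (M : {set U * V}) (x y : U + V) : bool :=
  match x, y with
  | inl u, inr v => (u, v) \in M
  | inr v, inl u => (u, v) \in M
  | _, _ => false
  end.

Definition freeU (M : {set U * V}) (u : U) : bool := [forall v, (u, v) \notin M].
Definition freeV (M : {set U * V}) (v : V) : bool := [forall u, (u, v) \notin M].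

Definition free_vertex (M : {set U * V}) (x : U + V) : bool :=
  match x with inl u => freeU M u | inr v => freeV M v end.

(* The path with vertex sequence x :: s (length = size s edges) is a simple
   path of G whose edges alternate between edges not in M and edges in M. *)
Definition alternating_path (M : {set U * V}) (x : U + V) (s : seq (U + V)) : bool :=
  [&& path adjG x s, uniq (x :: s) &
      sorted (fun a b : bool => a != b) (pairmap (edge_inM M) x s)].

Definition augmenting_path (M : {set U * V}) (x : U + V) (s : seq (U + V)) : bool :=
  [&& alternating_path M x s, free_vertex M x, free_vertex M (last x s) &
      match x, last x s with
      | inl _, inr _ => true
      | inr _, inl _ => true
      | _, _ => false
      end].

Definition alg_step (M : {set U * V}) (h : V -> nat)
    (M' : {set U * V}) (h' : V -> nat) : Prop :=
  exists (u : U) (j : V),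
    [/\ freeU M u, E u j,
        (forall v, E u v -> h j <= h v),
        M' = (u, j) |: [set e in M | e.2 != j] &
        h' = (fun v => if v == j then (h v).+1 else h v)].

(* run i M h : (M, h) = (M(i), h(i)) for some execution of the algorithm
   (iterations performed only while |M| < N). *)
Inductive alg_run (N : nat) : nat -> {set U * V} -> (V -> nat) -> Prop :=
  | alg_run0 : alg_run N 0 set0 (fun _ => 0)
  | alg_runS i M h M' h' :
      alg_run N i M h -> #|M| < N -> alg_step M h M' h' -> alg_run N i.+1 M' h'.

End Graph.

(* Main.v *)
Require Import Defs.
From mathcomp Require Import all_boot.
From mathcomp Require Import zify.
Set Implicit Arguments. Unset Strict Implicit. Unset Printing Implicit Defensive.

Lemma alg_inv (U V : finType) (E : U -> V -> bool) (N i : nat) M h :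
  alg_run E N i M h ->
  (forall u v v', (u, v) \in M -> E u v' -> h v <= (h v').+1) /\
  (forall v, freeV M v -> h v = 0).
Proof.
elim=> [|{}i {}M {}h M' h' _ [IH1 IH2] _ [u [j [fu Euj hmin -> ->]]]].
  by split=> [u v v'|v _]; rewrite ?inE.
split.
  move=> a b b' /setU1P [[-> ->] Eab'|].
    rewrite eqxx ltnS; have := hmin _ Eab'; case: ifP => // _ H.
    exact: leq_trans H (leqnSn _).
  rewrite inE => /andP [Hab bj] Eab'.
  rewrite (negbTE bj); apply: leq_trans (IH1 _ _ _ Hab Eab') _.
  by case: ifP.
move=> v /forallP fv; case: ifP => [/eqP ev|vj].
  by have := fv u; rewrite ev !inE eqxx.
apply: IH2; apply/forallP => a; apply/negP => Hav.
by have := fv a; rewrite !inE /= vj Hav orbT.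
Qed.

Lemma key (U V : finType) (E : U -> V -> bool) (M : {set U * V}) (h : V -> nat) :
  (forall u v v', (u, v) \in M -> E u v' -> h v <= (h v').+1) ->
  (forall v, freeV M v -> h v = 0) ->
  forall n s v, size s <= n ->
  path (adjG E) (inr v) s ->
  sorted (fun a b : bool => a != b) (pairmap (edge_inM M) (inr v) s) ->
  (match s with [::] => true | y :: _ => edge_inM M (inr v) y end) ->
  free_vertex M (last (inr v) s) ->
  (match last (inr v) s with inr _ => true | _ => false end) ->
  (h v).*2 <= size s.
Proof.
move=> I1 I2; elim=> [|n IH] [|y s] v //=.
- by move=> _ _ _ _ /I2 ->.
- by move=> _ _ _ _ /I2 ->.
case: y => // u; case: s => [|z s] //= Hs /andP [Euv Hp].
case: z Hp => // v' /= /andP [Euv' Hp] /andP [Hne Hsort] Huv Hfree Hlast.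
have Hnot : (u, v') \notin M by move: Hne; rewrite Huv; case: ((u,v') \in M).
have IHs := IH s v' _ Hp.
have Hsort' : sorted (fun a b : bool => a != b) (pairmap (edge_inM M) (inr v') s).
  by move: Hsort; case: s {IHs Hs Hp Hfree Hlast} => [|w s] //= /andP [].
have Hhead : (match s with [::] => true | y :: _ => edge_inM M (inr v') y end : bool).
  move: Hsort; case: s {IHs Hs Hp Hfree Hlast Hsort'} => [|w s] //= /andP [+ _].
  by rewrite (negbTE Hnot); case: w => [w|w] //=; case: (_ \in M).
have Hsn : size s <= n by lia.
have := IHs Hsn Hsort' Hhead Hfree Hlast.
have := I1 _ _ _ Huv Euv'.
rewrite -!addnn /= => H1 H2; lia.
Qed.

Theorem mainTheorem7 (U V : finType) (E : U -> V -> bool) (N : nat) :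
  #|U| = N -> #|V| = N ->
  (forall u : U, exists v : V, E u v) ->
  forall (i : nat) (M : {set U * V}) (h : V -> nat),
    alg_run E N i M h -> #|M| < N ->
    forall (l : nat) (u0 : U),
      freeU M u0 ->
      (forall v : V, E u0 v -> l <= h v) ->
      forall s : seq (U + V),
        augmenting_path E M (inl u0) s -> 2 * l + 1 <= size s.
Proof.
move=> _ _ _ i M h Hrun _ l u0 Hfree Hl s.
have [I1 I2] := alg_inv Hrun.
case: s => [|y s]; first by rewrite /augmenting_path /= !andbF.
case: y => [u1|v1].
  by rewrite /augmenting_path /alternating_path /=.
rewrite /augmenting_path /alternating_path /= => /and4P [/and3P [/andP [Ev1 Hp] _ Hsort] _ Hfv Hlast].
have Hnot : (u0, v1) \notin M by move/forallP: Hfree; apply.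
have Hsort' : sorted (fun a b : bool => a != b) (pairmap (edge_inM M) (inr v1) s).
  by move: Hsort; case: s {Hp Hfv Hlast} => [|w s] //= /andP [].
have Hhead : (match s with [::] => true | y :: _ => edge_inM M (inr v1) y end : bool).
  move: Hsort; case: s {Hp Hfv Hlast Hsort'} => [|w s] //= /andP [+ _].
  by rewrite (negbTE Hnot); case: w => [w|w] //=; case: (_ \in M).
have Hlast' : (match last (inr v1) s with inr _ => true | _ => false end : bool).
  by move: Hlast; case: (last (inr v1) s).
have := key I1 I2 (leqnn (size s)) Hp Hsort' Hhead Hfv Hlast'.
have := Hl _ Ev1; rewrite -addnn => H1 H2; lia.
Qed.
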